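(* For every positive integer $t$ there exist constants $\alpha,\beta,\gamma>0$ such that the following holds. Let $s$ be a positive integer and $n\geq 2$ an integer, and let $G$ be a quasi-comparability graph of complexity $t$ on $n$ vertices that contains no clique of size $s$. Then $$\chi(G)\leq \alpha s^{\beta}(\log n)^{\gamma}.$$
   Context: For $\mathbf{x},\mathbf{y}\in\mathbb{R}^t$ write $\mathbf{x}\prec\mathbf{y}$ if $\mathbf{x}(i)<\mathbf{y}(i)$ for every $i\in[t]$. A quasi-comparability graph of complexity $t$ is a finite simple graph $G$ with $V(G)\subset\mathbb{R}^t\times\mathbb{R}^t$ in which distinct vertices $(\mathbf{x},\mathbf{y})$ and $(\mathbf{x}',\mathbf{y}')$ are adjacent iff $\mathbf{x}\prec\mathbf{y}'$ or $\mathbf{x}'\prec\mathbf{y}$. $\chi(G)$ is the chromatic number. *)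

(* Defs.v *)
From Stdlib Require Import Reals.
From mathcomp Require Import all_boot.
Set Implicit Arguments. Unset Strict Implicit. Unset Printing Implicit Defensive.

Definition vprec (t : nat) (x y : 'I_t -> R) : bool :=
  [forall i, if Rlt_dec (x i) (y i) then true else false].

(* A quasi-comparability graph of complexity t on n vertices: the vertices are
   the points p i (i : 'I_n) of R^t x R^t, p injective (distinct points). *)
Definition qc_adj (t n : nat) (p : 'I_n -> ('I_t -> R) * ('I_t -> R))
  (i j : 'I_n) : bool :=
  (i != j) && (vprec (p i).1 (p j).2 || vprec (p j).1 (p i).2).

Definition is_clique t n (p : 'I_n -> ('I_t -> R) * ('I_t -> R))
  (S : {set 'I_n}) : bool :=
  [forall i in S, forall j in S, (i != j) ==> qc_adj p i j].

Definition clique_free t n (p : 'I_n -> ('I_t -> R) * ('I_t -> R)) (s : nat)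
  : Prop :=
  ~ exists S : {set 'I_n}, #|S| = s /\ is_clique p S.

Definition colorable t n (p : 'I_n -> ('I_t -> R) * ('I_t -> R)) (k : nat)
  : bool :=
  [exists c : {ffun 'I_n -> 'I_k},
     [forall i, forall j, qc_adj p i j ==> (c i != c j)]].

Lemma colorable_n t n (p : 'I_n -> ('I_t -> R) * ('I_t -> R)) :
  exists k, colorable p k.
Proof.
exists n; apply/existsP; exists [ffun i => i].
apply/forallP => i; apply/forallP => j; apply/implyP => /andP [Hij _].
by rewrite !ffunE.
Qed.

Definition chromatic_number t n (p : 'I_n -> ('I_t -> R) * ('I_t -> R))
  : nat := ex_minn (colorable_n p).

(* Main.v *)
Require Import Defs.
From Stdlib Require Import Reals Lra.
From mathcomp Require Import all_boot zify.
Set Implicit Arguments. Unset Strict Implicit. Unset Printing Implicit Defensive.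

Lemma ex_lev (X Y : nat) : exists m, X %/ 2^m == Y %/ 2^m.
Proof.
exists (X + Y); rewrite !divn_small //.
- apply: leq_trans (@ltn_expl 2 Y isT) _; apply: leq_pexp2l => //; lia.
- apply: leq_trans (@ltn_expl 2 X isT) _; apply: leq_pexp2l => //; lia.
Qed.

Definition lev X Y := ex_minn (ex_lev X Y).

Lemma lev_eq X Y : X %/ 2^(lev X Y) = Y %/ 2^(lev X Y).
Proof. rewrite /lev; case: ex_minnP => m /eqP -> _ //. Qed.

Lemma lev_min X Y m : X %/ 2^m = Y %/ 2^m -> lev X Y <= m.
Proof. rewrite /lev; case: ex_minnP => m0 _ H E; apply: H; exact/eqP. Qed.

Lemma div_lt_lt a b d : a %/ d < b %/ d -> a < b.
Proof. by move=> H; rewrite ltnNge; apply/negP => /(leq_div2r d); rewrite leqNgt H. Qed.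

Lemma halves X Y m : lev X Y = m.+1 ->
  X %/ 2^m %/ 2 = Y %/ 2^m %/ 2 /\ X %/ 2^m != Y %/ 2^m.
Proof.
move=> E; have := lev_eq X Y; rewrite E expnSr !divnMA => ->; split=> //.
apply/negP => /eqP H; have := lev_min H; rewrite E; lia.
Qed.

Lemma mod2 a : a = a %/ 2 * 2 + a %% 2 /\ a %% 2 < 2.
Proof. by split; [apply: divn_eq | rewrite ltn_mod]. Qed.

Lemma keyF X1 Y1 X2 Y2 m : lev X1 Y1 = m -> lev X2 Y2 = m ->
  X1 < Y1 -> X2 < Y2 -> X1 %/ 2^m = X2 %/ 2^m -> X1 < Y2.
Proof.
case: m => [|m] E1 E2 L1 L2 P.
  by have := lev_eq X1 Y1; rewrite E1 expn0 !divn1 => H; lia.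
have [H1 N1] := halves E1; have [H2 N2] := halves E2.
move: P; rewrite expnSr !divnMA => P.
have D1 := leq_div2r (2^m) (ltnW L1); have D2 := leq_div2r (2^m) (ltnW L2).
apply: (@div_lt_lt _ _ (2^m)).
move: (X1 %/ 2^m) (Y1 %/ 2^m) (X2 %/ 2^m) (Y2 %/ 2^m) H1 N1 H2 N2 P D1 D2
  => a1 b1 a2 b2 H1 N1 H2 N2 P D1 D2.
have [Ea1 ra1] := mod2 a1; have [Eb1 rb1] := mod2 b1;
have [Ea2 ra2] := mod2 a2; have [Eb2 rb2] := mod2 b2.
move: N1 N2 => /eqP N1 /eqP N2. lia.
Qed.

Lemma keyB X1 Y1 X2 Y2 m : lev X1 Y1 = m -> lev X2 Y2 = m ->
  Y1 <= X1 -> Y2 <= X2 -> X1 %/ 2^m = X2 %/ 2^m -> Y2 <= X1.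
Proof.
case: m => [|m] E1 E2 L1 L2 P.
  have := lev_eq X1 Y1; have := lev_eq X2 Y2; rewrite E1 E2 in P *.
  rewrite expn0 !divn1 in P * => H H'; lia.
have [H1 N1] := halves E1; have [H2 N2] := halves E2.
move: P; rewrite expnSr !divnMA => P.
have D1 := leq_div2r (2^m) L1; have D2 := leq_div2r (2^m) L2.
apply/ltnW/(@div_lt_lt _ _ (2^m)).
move: (X1 %/ 2^m) (Y1 %/ 2^m) (X2 %/ 2^m) (Y2 %/ 2^m) H1 N1 H2 N2 P D1 D2
  => a1 b1 a2 b2 H1 N1 H2 N2 P D1 D2.
have [Ea1 ra1] := mod2 a1; have [Eb1 rb1] := mod2 b1;
have [Ea2 ra2] := mod2 a2; have [Eb2 rb2] := mod2 b2.
move: N1 N2 => /eqP N1 /eqP N2. lia.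
Qed.

Lemma keyLt X1 Y1 X2 Y2 m : lev X1 Y1 = m -> lev X2 Y2 = m ->
  X1 %/ 2^m < X2 %/ 2^m -> X1 < Y2 /\ Y1 < X2.
Proof.
move=> E1 E2 L; have := lev_eq X1 Y1; have := lev_eq X2 Y2; rewrite E1 E2 => H2 H1.
split; apply: (@div_lt_lt _ _ (2^m)); lia.
Qed.

Lemma key_trans X1 Y1 X2 Y2 X3 Y3 m :
  lev X1 Y1 = m -> lev X2 Y2 = m -> lev X3 Y3 = m ->
  (X1 < Y1) = (X2 < Y2) -> (X2 < Y2) = (X3 < Y3) ->
  X1 < Y2 -> X2 < Y3 -> X1 < Y3.
Proof.
move=> E1 E2 E3 T12 T23 L12 L23.
have := lev_eq X1 Y1; have := lev_eq X2 Y2; have := lev_eq X3 Y3.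
rewrite E1 E2 E3 => H3 H2 H1.
have D12 := leq_div2r (2^m) (ltnW L12); have D23 := leq_div2r (2^m) (ltnW L23).
case: (ltnP (X1 %/ 2^m) (X3 %/ 2^m)) => C.
  by case: (keyLt E1 E3 C).
have P12 : X1 %/ 2^m = X2 %/ 2^m by lia.
have P13 : X1 %/ 2^m = X3 %/ 2^m by lia.
case: (boolP (X1 < Y1)) => B.
  apply: (keyF E1 E3 B) => //; by rewrite -T23 -T12.
exfalso; move: B; rewrite -leqNgt => B.
have B2 : Y2 <= X2 by rewrite leqNgt -T12 -leqNgt.
have := keyB E1 E2 B B2 P12; lia.
Qed.


Definition rlt (a b : R) : bool := if Rlt_dec a b then true else false.
Lemma rltP (a b : R) : reflect (Rlt a b) (rlt a b).
Proof. rewrite /rlt; case: Rlt_dec => H; [exact: ReflectT | exact: ReflectF]. Qed.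

Lemma vprecP t (x y : 'I_t -> R) : reflect (forall i, Rlt (x i) (y i)) (vprec x y).
Proof.
apply: (iffP forallP) => H i; have := H i; case: Rlt_dec => //.
Qed.

Section G.
Variables (t n : nat) (p : 'I_n -> ('I_t -> R) * ('I_t -> R)).

Definition valw (w : 'I_n * 'I_t * bool) : R :=
  if w.2 then (p w.1.1).1 w.1.2 else (p w.1.1).2 w.1.2.
Definition rank (z : R) : nat := #|[set w : 'I_n * 'I_t * bool | rlt (valw w) z]|.

Lemma rank_lt w z : Rlt (valw w) z -> rank (valw w) < rank z.
Proof.
move=> H; apply: proper_card; apply/properP; split.
  apply/subsetP => w'; rewrite !inE => /rltP H'; apply/rltP; lra.
exists w; rewrite !inE; [exact/rltP | apply/rltP; lra].
Qed.

Lemma rank_le z z' : Rle z' z -> rank z' <= rank z.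
Proof.
move=> H; apply: subset_leq_card; apply/subsetP => w'; rewrite !inE => /rltP H'; apply/rltP; lra.
Qed.

Lemma rank_iff w z : Rlt (valw w) z <-> rank (valw w) < rank z.
Proof.
split; first exact: rank_lt.
move=> H; case: (Rlt_or_le (valw w) z) => // H'.
have := rank_le H'; lia.
Qed.

Definition Xv u i := rank ((p u).1 i).
Definition Yv u i := rank ((p u).2 i).
Definition Rel u v := vprec (p u).1 (p v).2.

Lemma RelE u v : Rel u v = [forall i, Xv u i < Yv v i].
Proof.
apply/idP/idP.
  move/vprecP => H; apply/forallP => i; exact: (proj1 (rank_iff (u, i, true) _) (H i)).
move/forallP => H; apply/vprecP => i; exact: (proj2 (rank_iff (u, i, true) _) (H i)).
Qed.

Definition lv u i := lev (Xv u i) (Yv u i).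
Definition tg u i := Xv u i < Yv u i.
Definition sameclass u v := [forall i, (lv u i == lv v i) && (tg u i == tg v i)].

Lemma sameclassP u v : reflect (forall i, lv u i = lv v i /\ tg u i = tg v i) (sameclass u v).
Proof.
apply: (iffP forallP) => H i; have := H i; [by case/andP => /eqP -> /eqP -> | by case=> -> ->; rewrite !eqxx].
Qed.

Lemma sameclass_trans u v w : sameclass u v -> sameclass v w -> sameclass u w.
Proof.
move=> /sameclassP H1 /sameclassP H2; apply/sameclassP => i.
by case: (H1 i) => -> ->; case: (H2 i).
Qed.

Lemma Rel_trans u v w : sameclass u v -> sameclass v w -> Rel u v -> Rel v w -> Rel u w.
Proof.
move=> /sameclassP H1 /sameclassP H2; rewrite !RelE => /forallP R1 /forallP R2.
apply/forallP => i; have [L1 T1] := H1 i; have [L2 T2] := H2 i.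
apply: (@key_trans _ _ (Xv v i) (Yv v i) _ _ (lv u i)) => //.
all: try by [rewrite L1 | rewrite L1 L2 | rewrite T1 | rewrite T1 T2 | rewrite -T1 | rewrite T2 | exact: R1 | exact: R2].
exact: T2.
Qed.

Definition sq u v := [&& sameclass u v, Rel u v & (~~ Rel v u) || (u < v)].

Lemma sq_irr u : ~~ sq u u.
Proof. rewrite /sq; case: (Rel u u) => /=; [rewrite ltnn; lia | by rewrite andbF]. Qed.

Lemma sameclass_sym u v : sameclass u v -> sameclass v u.
Proof. by move/sameclassP => H; apply/sameclassP => i; case: (H i) => -> ->. Qed.

Lemma sq_trans u v w : sq u v -> sq v w -> sq u w.
Proof.
case/and3P => C1 R1 O1; case/and3P => C2 R2 O2.
apply/and3P; split; first exact: sameclass_trans C1 C2.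
  exact: Rel_trans R1 R2.
case: (boolP (Rel w u)) => //= Rwu.
have Rwv : Rel w v := Rel_trans (sameclass_sym (sameclass_trans C1 C2)) C1 Rwu R1.
have Rvu : Rel v u := Rel_trans C2 (sameclass_sym (sameclass_trans C1 C2)) R2 Rwu.
move: O1 O2; rewrite Rwv Rvu /=; lia.
Qed.

Lemma sq_adj u v : sq u v -> qc_adj p u v.
Proof.
move=> H; rewrite /qc_adj; apply/andP; split.
  by apply/negP => /eqP E; subst; move: (sq_irr v); rewrite H.
by case/and3P: H => _ H _; rewrite /Rel in H; rewrite H.
Qed.

Lemma adj_sq u v : sameclass u v -> qc_adj p u v -> sq u v || sq v u.
Proof.
move=> C /andP [Nuv Ruv]; rewrite /sq C (sameclass_sym C) /=.
rewrite /Rel; case: (ltngtP u v) => [l|l|E].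
- by move: Ruv; case: (vprec (p u).1 (p v).2); case: (vprec (p v).1 (p u).2).
- by move: Ruv; case: (vprec (p u).1 (p v).2); case: (vprec (p v).1 (p u).2).
- have E' : u = v by apply: val_inj.
  by rewrite E' eqxx in Nuv.
Qed.

Definition chainb (S : {set 'I_n}) v :=
  [forall w in S, sq w v] && [forall a in S, forall b in S, (a != b) ==> sq a b || sq b a].

Definition h v := \max_(S : {set 'I_n} | chainb S v) #|S|.

Lemma chainb0 v : chainb set0 v.
Proof. by apply/andP; split; apply/forall_inP => w; rewrite inE. Qed.

Lemma h_ex v : exists2 S, chainb S v & h v = #|S|.
Proof.
rewrite /h (bigmax_eq_arg set0 (chainb0 v)).
case: arg_maxnP; first exact: chainb0.
by move=> S HS _; exists S.
Qed.

Lemma h_lt u v : sq u v -> h u < h v.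
Proof.
move=> Huv; have [S /andP [/forall_inP HS1 /forall_inP HS2] ->] := h_ex u.
have uS : u \notin S by apply/negP => /HS1; apply/negP; exact: sq_irr.
have -> : #|S| < h v = (#|u |: S| <= h v) by rewrite cardsU1 uS.
apply: leq_bigmax_cond; apply/andP; split.
  apply/forall_inP => w; rewrite in_setU1 => /orP [/eqP -> //|/HS1 Hw]; exact: sq_trans Hw Huv.
apply/forall_inP => a; rewrite in_setU1 => Ha; apply/forall_inP => b; rewrite in_setU1 => Hb.
apply/implyP => Nab.
case/orP: Ha => [/eqP Ea|Ha]; case/orP: Hb => [/eqP Eb|Hb].
- by rewrite Ea Eb eqxx in Nab.
- by rewrite Ea (HS1 _ Hb) orbT.
- by rewrite Eb (HS1 _ Ha).
- by have := HS2 _ Ha; move/forall_inP/(_ _ Hb)/implyP/(_ Nab).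
Qed.

Lemma clique_sub (S : {set 'I_n}) s : is_clique p S -> s <= #|S| ->
  exists S' : {set 'I_n}, #|S'| = s /\ is_clique p S'.
Proof.
move: {2}#|S| (leqnn #|S|) => k; elim: k S => [|k IH] S Hk HS Hs.
  by exists S; split => //; lia.
case: (ltngtP s #|S|) => C; last by exists S.
  have [x xS] : exists x, x \in S.
    by apply/set0Pn; rewrite -card_gt0; lia.
  apply: (IH (S :\ x)).
  - by rewrite (cardsD1 x S) xS in Hk; lia.
  - apply/forall_inP => a /setD1P [_ Ha]; apply/forall_inP => b /setD1P [_ Hb].
    by move/forall_inP: HS => /(_ a Ha) /forall_inP /(_ b Hb).
  - by rewrite (cardsD1 x S) xS in C; lia.
lia.
Qed.

Lemma h_bound v s : clique_free p s -> h v < s.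
Proof.
move=> CF; have [S /andP [_ /forall_inP HS2] E] := h_ex v.
rewrite E ltnNge; apply/negP => Hs.
have Cl : is_clique p S.
  apply/forall_inP => a Ha; apply/forall_inP => b Hb; apply/implyP => Nab.
  have := HS2 _ Ha; move/forall_inP/(_ _ Hb)/implyP/(_ Nab)/orP => [/sq_adj //|/sq_adj].
  by rewrite /qc_adj eq_sym orbC.
have [S' [H1 H2]] := clique_sub Cl Hs.
by apply: CF; exists S'.
Qed.

End G.


Section H.
Variables (t n : nat) (p : 'I_n -> ('I_t -> R) * ('I_t -> R)).

Lemma rank_bound z : rank p z <= n * t * 2.
Proof.
rewrite /rank; apply: leq_trans (max_card _) _.
by rewrite !card_prod !card_ord card_bool.
Qed.

Lemma lv_bound u i : lv p u i <= (trunc_log 2 (n * t * 2)).+1.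
Proof.
apply: lev_min.
have L := @trunc_log_ltn 2 (n * t * 2) isT.
rewrite !divn_small //.
  exact: leq_ltn_trans (rank_bound _) L.
exact: leq_ltn_trans (rank_bound _) L.
Qed.

Lemma chi_bound s : 0 < s -> clique_free p s ->
  chromatic_number p <= ((trunc_log 2 (n * t * 2)).+2 * 2) ^ t * s.
Proof.
move=> s0 CF.
set T := trunc_log 2 (n * t * 2).
pose CT := ({ffun 'I_t -> 'I_(T.+2) * bool} * 'I_s.-1.+1)%type.
have Hc : colorable p #|{: CT}|.
  apply/existsP.
  exists [ffun v => enum_rank (([ffun i => (inord (lv p v i), tg p v i)], inord (h p v)) : CT)].
  apply/forallP => u; apply/forallP => v; apply/implyP => Adj; rewrite !ffunE.
  apply/negP => /eqP /enum_rank_inj [] /ffunP F Eh.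
  have C : sameclass p u v.
    apply/sameclassP => i; have := F i; rewrite !ffunE => [[E1 E2]]; split => //.
    move/(congr1 val): E1 => /=; rewrite !inordK //.
    + by have := lv_bound v i; lia.
    + by have := lv_bound u i; lia.
  move/(congr1 val): Eh => /=; rewrite !inordK; last first.
  - by have := h_bound u CF; lia.
  - by have := h_bound v CF; lia.
  move=> Eh; case/orP: (adj_sq C Adj) => /h_lt; rewrite Eh ltnn //.
rewrite /chromatic_number; case: ex_minnP => m _ Hm.
apply: leq_trans (Hm _ Hc) _.
rewrite card_prod card_ffun card_prod !card_ord card_bool.
by rewrite prednK.
Qed.
End H.


Local Open Scope R_scope.

Lemma ln_le (x y : R) : 0 < x -> x <= y -> ln x <= ln y.
Proof.
move=> Hx Hxy; case: (Rle_lt_or_eq_dec _ _ Hxy) => H.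
  by apply: Rlt_le; apply: ln_increasing.
by rewrite H; apply: Rle_refl.
Qed.

Lemma INR_expn2 (T : nat) : INR (2 ^ T)%N = 2 ^ T.
Proof.
elim: T => [|T IH]; first by rewrite expn0 /=.
rewrite expnS mult_INR IH /=; lra.
Qed.

Lemma real_core (t n T : nat) : (2 <= n)%N -> (0 < t)%N -> (2 ^ T <= n * t * 2)%N ->
  INR (T.+2 * 2) <= (2 * ln (INR (t * 2)) + 6 * ln 2) / (ln 2 * ln 2) * ln (INR n).
Proof.
move=> n2 t0 HT.
have L2 : 0 < ln 2 by rewrite -ln_1; apply: ln_increasing; lra.
have Hn : 2 <= INR n by have := le_INR 2 n (ssrnat.leP n2); rewrite /= ; lra.
have Ln : ln 2 <= ln (INR n) by apply: ln_le; lra.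
have Ht : 1 <= INR (t * 2).
  have h1 : (1 <= t * 2)%N by lia.
  have := le_INR 1 (t * 2) (ssrnat.leP h1); rewrite /=; lra.
have Lt : 0 <= ln (INR (t * 2)) by rewrite -ln_1; apply: ln_le; lra.
have HT' : INR T * ln 2 <= ln (INR n) + ln (INR (t * 2)).
  rewrite -ln_pow; last lra.
  have E : INR (n * t * 2) = INR n * INR (t * 2) by rewrite -mulnA mult_INR.
  rewrite -ln_mult; try lra.
  apply: ln_le; first by apply: pow_lt; lra.
  rewrite -E.
  have := le_INR _ _ (ssrnat.leP HT); rewrite INR_expn2; lra.
have E2 : INR (T.+2 * 2) = 2 * (INR T + 2) by rewrite mult_INR !S_INR /=; lra.
rewrite E2.
set a := ln 2 in L2 Ln HT' *; set b := ln (INR n) in Ln HT' *; set c := ln (INR (t * 2)) in Lt HT' *.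
have Pa : 0 < a * a by nra.
apply: (Rmult_le_reg_r (a * a)) => //.
have -> : (2 * c + 6 * a) / (a * a) * b * (a * a) = (2 * c + 6 * a) * b by field; lra.
have h1 : a * c <= b * c by nra.
have h2 : a * (INR T * a) <= a * (b + c) by nra.
nra.
Qed.

Lemma INR_expn (m T : nat) : INR (m ^ T)%N = INR m ^ T.
Proof.
elim: T => [|T IH]; first by rewrite expn0 /=.
rewrite expnS mult_INR IH /=; lra.
Qed.

Theorem theorem3p1 :
  forall t : nat, (0 < t)%N ->
  exists alpha beta gamma : R,
    Rlt 0 alpha /\ Rlt 0 beta /\ Rlt 0 gamma /\
    forall (s n : nat) (p : 'I_n -> ('I_t -> R) * ('I_t -> R)),
      (0 < s)%N -> (2 <= n)%N -> injective p -> clique_free p s ->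
      Rle (INR (chromatic_number p))
          (Rmult (Rmult alpha (Rpower (INR s) beta))
                 (Rpower (ln (INR n)) gamma)).
Proof.
move=> t t0.
have L2 : 0 < ln 2 by rewrite -ln_1; apply: ln_increasing; lra.
have Ht : 1 <= INR (t * 2).
  have h1 : (1 <= t * 2)%N by lia.
  have := le_INR 1 (t * 2) (ssrnat.leP h1); rewrite /=; lra.
have Lt : 0 <= ln (INR (t * 2)) by rewrite -ln_1; apply: ln_le; lra.
set A := (2 * ln (INR (t * 2)) + 6 * ln 2) / (ln 2 * ln 2).
have A0 : 0 < A.
  rewrite /A; apply: Rdiv_lt_0_compat; [lra | nra].
exists (A ^ t), 1, (INR t); split; first by apply: pow_lt.
split; first lra.
split; first by apply: lt_0_INR; apply/ssrnat.ltP.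
move=> s n p s0 n2 _ CF.
have Hc := @chi_bound t n p s s0 CF.
have HT : (2 ^ trunc_log 2 (n * t * 2) <= n * t * 2)%N.
  apply: trunc_logP => //; rewrite !muln_gt0; apply/andP; split => //; apply/andP; split => //; lia.
have core := real_core n2 t0 HT.
have Hs : 0 < INR s by apply: lt_0_INR; apply/ssrnat.ltP.
have Hn : 2 <= INR n by have := le_INR 2 n (ssrnat.leP n2); rewrite /= ; lra.
have Ln : ln 2 <= ln (INR n) by apply: ln_le; lra.
rewrite Rpower_1 // Rpower_pow; last lra.
apply: Rle_trans (le_INR _ _ (ssrnat.leP Hc)) _.
rewrite mult_INR INR_expn.
set x := INR _ in core *.
have x0 : 0 <= x by apply: pos_INR.
have : x ^ t <= (A * ln (INR n)) ^ t by apply: pow_incr; split.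
rewrite Rpow_mult_distr => H.
have := Rmult_le_compat_r (INR s) _ _ (Rlt_le _ _ Hs) H.
lra.
Qed.
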